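(* Let $H(s)=\sum_{a=1}^M H_a(s)$, $0\le s\le1$, be a differentiable family of stoquastic frustration-free Hamiltonians on $\mathcal{Q}^n$ with $J=\max_s\|dH(s)/ds\|$. Let $T$ be a positive integer and $H^{(j)}=H(j/T)$ for $j=0,\ldots,T$. Assume each $H^{(j)}$ has a unique ground-state $|\psi^{(j)}\rangle$, with $H^{(j)}|\psi^{(j)}\rangle=0$, chosen to be a non-negative state, and let $\Delta$ be the smallest, over $j=0,\ldots,T$, of the spectral gap of $H^{(j)}$ (the difference between its smallest and second smallest eigenvalues). Then for every $j=0,\ldots,T-1$, $$\langle\psi^{(j+1)}|\psi^{(j)}\rangle\ge 1-\frac{J^2}{T^2\Delta^2}.$$
   Context: $\mathcal{Q}^n=(\mathbb{C}^2)^{\otimes n}$ with standard basis $\{|x\rangle\}$. A local Hamiltonian $H=\sum_a H_a$ (each term acting on $O(1)$ qubits) is stoquastic if each term has real non-positive off-diagonal entries in the standard basis, and frustration-free if each term is positive semidefinite and the ground-state of $H$ is a zero eigenvector of every term. A non-negative state is a normalized vector with real non-negative amplitudes in the standard basis. *)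

(* Defs.v *)
From HB Require Import structures.
From mathcomp Require Import all_boot all_order all_algebra.
From mathcomp Require Import all_classical all_reals all_analysis.
Set Implicit Arguments. Unset Strict Implicit. Unset Printing Implicit Defensive.
Import Order.TTheory GRing.Theory Num.Theory.
Import numFieldNormedType.Exports.
Local Open Scope ring_scope.
Local Open Scope classical_set_scope.

Section QDefs.
Variable R : realType.
Variable N : nat.

(* Operators on Q^n are represented by real N x N matrices (N = 2^n) in the
   standard basis; stoquastic Hermitian operators have real entries. *)
Definition hermitian (A : 'M[R]_N) : Prop := A^T = A.

Definition stoquastic (A : 'M[R]_N) : Prop :=
  hermitian A /\ forall i j : 'I_N, i != j -> A i j <= 0.

Definition qform (A : 'M[R]_N) (v : 'cV[R]_N) : R := (v^T *m A *m v) 0 0.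

Definition psd (A : 'M[R]_N) : Prop :=
  hermitian A /\ forall v : 'cV[R]_N, 0 <= qform A v.

Definition vnorm (v : 'cV[R]_N) : R := Num.sqrt (\sum_i v i 0 ^+ 2).

Definition opnorm (A : 'M[R]_N) : R :=
  sup [set vnorm (A *m v) | v in [set v : 'cV[R]_N | vnorm v = 1]].

Definition inner (u v : 'cV[R]_N) : R := (u^T *m v) 0 0.

Definition nonneg_state (v : 'cV[R]_N) : Prop :=
  (forall i, 0 <= v i 0) /\ vnorm v = 1.

Definition is_min_eig (A : 'M[R]_N) (l0 : R) : Prop :=
  eigenvalue A l0 /\ forall l, eigenvalue A l -> l0 <= l.

(* second smallest eigenvalue, counted with multiplicity *)
Definition is_second_eig (A : 'M[R]_N) (l0 l1 : R) : Prop :=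
  if (2 <= \rank (eigenspace A l0))%N then l1 = l0
  else [/\ eigenvalue A l1, l0 < l1 &
         forall l, eigenvalue A l -> l0 < l -> l1 <= l].

Definition is_spectral_gap (A : 'M[R]_N) (d : R) : Prop :=
  exists l0 l1, [/\ is_min_eig A l0, is_second_eig A l0 l1 & d = l1 - l0].

End QDefs.

Definition Htot (R : realType) (N M : nat) (H : 'I_M -> R -> 'M[R]_N) (s : R)
  : 'M[R]_N := \sum_(a < M) H a s.

Definition dHtot (R : realType) (N M : nat) (H : 'I_M -> R -> 'M[R]_N) (s : R)
  : 'M[R]_N := \matrix_(i, k) derive1 (fun t => Htot H t i k) s.

Definition frustration_free (R : realType) (N M : nat) (Hs : 'I_M -> 'M[R]_N)
  : Prop :=
  (forall a, psd (Hs a)) /\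
  exists v : 'cV[R]_N, v != 0 /\ forall a, Hs a *m v = 0.

Definition cont_on_01 (R : realType) (f : R -> R) : Prop :=
  {within `[0%R, 1%R]%classic, continuous f}.

(* Main.v *)
Require Import Defs.
From HB Require Import structures.
From mathcomp Require Import all_boot all_order all_algebra.
From mathcomp Require Import all_classical all_reals all_analysis.
From mathcomp Require Import ring lra.
Import Order.TTheory GRing.Theory Num.Theory.
Import numFieldNormedType.Exports.
Local Open Scope ring_scope.
Local Open Scope classical_set_scope.
Set Implicit Arguments. Unset Strict Implicit. Unset Printing Implicit Defensive.
Section Vec.
Variable R : realType.
Variable N : nat.
Implicit Types u v w : 'cV[R]_N.

Lemma innerE u v : inner u v = \sum_i u i 0 * v i 0.
Proof. by rewrite /inner mxE; apply: eq_bigr => i _; rewrite mxE. Qed.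

Lemma innerC u v : inner u v = inner v u.
Proof. by rewrite !innerE; apply: eq_bigr => i _; rewrite mulrC. Qed.

Lemma innerDr u v w : inner u (v + w) = inner u v + inner u w.
Proof. by rewrite /inner mulmxDr mxE. Qed.

Lemma innerZr u v (a : R) : inner u (a *: v) = a * inner u v.
Proof. by rewrite /inner -scalemxAr mxE. Qed.

Lemma innerNr u v : inner u (- v) = - inner u v.
Proof. by rewrite -scaleN1r innerZr mulN1r. Qed.

Lemma innerBr u v w : inner u (v - w) = inner u v - inner u w.
Proof. by rewrite innerDr innerNr. Qed.

Lemma innerDl u v w : inner (v + w) u = inner v u + inner w u.
Proof. by rewrite innerC innerDr !(innerC u). Qed.

Lemma innerZl u v (a : R) : inner (a *: v) u = a * inner v u.
Proof. by rewrite innerC innerZr innerC. Qed.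

Lemma innerBl u v w : inner (v - w) u = inner v u - inner w u.
Proof. by rewrite innerC innerBr !(innerC u). Qed.

Lemma inner_ge0 v : 0 <= inner v v.
Proof. by rewrite innerE; apply: sumr_ge0 => i _; rewrite -expr2 sqr_ge0. Qed.

Lemma vnorm2 v : vnorm v ^+ 2 = inner v v.
Proof.
rewrite /vnorm sqr_sqrtr; last by apply: sumr_ge0 => i _; rewrite sqr_ge0.
by rewrite innerE; apply: eq_bigr => i _; rewrite expr2.
Qed.

Lemma vnorm_ge0 v : 0 <= vnorm v.
Proof. exact: sqrtr_ge0. Qed.

Lemma vnormE v : vnorm v = Num.sqrt (inner v v).
Proof. by rewrite -vnorm2 sqrtr_sqr ger0_norm ?vnorm_ge0. Qed.

Lemma inner0_eq0 v : inner v v = 0 -> v = 0.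
Proof.
rewrite innerE => /eqP; rewrite psumr_eq0; last by move=> i _; rewrite -expr2 sqr_ge0.
move=> /allP H; apply/matrixP => i j; rewrite (ord1 j) mxE.
have := H i (mem_index_enum _); rewrite -expr2 sqrf_eq0 => /eqP ->. done.
Qed.

Lemma CS2 u v : inner u v ^+ 2 <= inner u u * inner v v.
Proof.
have [v0|vn0] := eqVneq (inner v v) 0.
  have ->: v = 0 by exact: inner0_eq0.
  by rewrite /inner mulmx0 trmx0 mul0mx !mxE mulr0 expr2 mul0r.
set t := inner u v / inner v v.
have := inner_ge0 (u - t *: v).
rewrite innerBl !innerBr !innerZl !innerZr (innerC v u).
have vp : 0 < inner v v by rewrite lt_neqAle eq_sym vn0 inner_ge0.
rewrite /t => H.
have : 0 <= inner v v * (inner u u - inner u v / inner v v * inner u v -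
      (inner u v / inner v v * inner u v -
       inner u v / inner v v * (inner u v / inner v v * inner v v))).
  by rewrite mulr_ge0 // ltW.
have -> : inner v v * (inner u u - inner u v / inner v v * inner u v -
      (inner u v / inner v v * inner u v -
       inner u v / inner v v * (inner u v / inner v v * inner v v))) =
      inner v v * inner u u - inner u v ^+ 2.
  by field; rewrite vn0.
by rewrite subr_ge0 mulrC.
Qed.

Lemma CS u v : inner u v <= vnorm u * vnorm v.
Proof.
apply: le_trans (ler_norm _) _.
rewrite !vnormE -sqrtrM ?inner_ge0 // -sqrtr_sqr ler_sqrt ?CS2 //.
by rewrite mulr_ge0 ?inner_ge0.
Qed.

Lemma vnormZ (a : R) v : vnorm (a *: v) = `|a| * vnorm v.
Proof.
by rewrite !vnormE innerZl innerZr mulrA -expr2 sqrtrM ?sqr_ge0 // sqrtr_sqr.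
Qed.

End Vec.
Section Op.
Variable R : realType.
Variable N : nat.

Lemma le_sum1 (F : 'I_N -> R) i : (forall j, 0 <= F j) -> F i <= \sum_j F j.
Proof. by move=> H; rewrite (bigD1 i) //= lerDl sumr_ge0. Qed.

Lemma vnorm_le_l1 (x : 'cV[R]_N) : vnorm x <= \sum_i `|x i 0|.
Proof.
set S := \sum_i `|x i 0|.
have S0 : 0 <= S by apply: sumr_ge0.
rewrite /vnorm -(ger0_norm S0) -sqrtr_sqr ler_sqrt ?sqr_ge0 //.
rewrite expr2 {2}/S mulr_sumr; apply: ler_sum => i _.
rewrite -real_normK ?num_real // expr2 mulrC.
by rewrite ler_wpM2r // (le_sum1 (F := fun j => `|x j 0|)).
Qed.

Lemma coord_le (v : 'cV[R]_N) i : vnorm v = 1 -> `|v i 0| <= 1.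
Proof.
move=> h.
have : v i 0 ^+ 2 <= 1.
  have -> : (1 : R) = inner v v by rewrite -vnorm2 h expr1n.
  rewrite innerE expr2.
  by apply: (le_sum1 (F := fun j => v j 0 * v j 0)) => j; rewrite -expr2 sqr_ge0.
move=> h2; have n0 := normr_ge0 (v i 0).
rewrite -real_normK ?num_real // in h2; nra.
Qed.

Lemma opnorm_ge (M : 'M[R]_N) v : vnorm v = 1 -> vnorm (M *m v) <= opnorm M.
Proof.
move=> h; apply: ub_le_sup; last by exists v.
exists (\sum_i \sum_k `|M i k|) => y [w /= hw <-].
apply: le_trans (vnorm_le_l1 _) _; apply: ler_sum => i _.
rewrite mxE; apply: le_trans (ler_norm_sum _ _ _) _; apply: ler_sum => k _.
by rewrite normrM -{2}(mulr1 `|M i k|) ler_wpM2l // coord_le.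
Qed.

Lemma opnorm_ge0 (M : 'M[R]_N) (v : 'cV[R]_N) : vnorm v = 1 -> 0 <= opnorm M.
Proof. by move=> h; exact: le_trans (vnorm_ge0 _) (opnorm_ge M h). Qed.

Lemma within_sum (A : set R) n (f : 'I_n -> R -> R) :
  (forall i, {within A, continuous f i}) -> {within A, continuous (\sum_i f i)}.
Proof.
move=> H; apply: (big_ind (fun g => {within A, continuous g})) => //.
- by move=> x; apply: cst_continuous.
- by move=> g h Hg Hh x; exact: (continuousD (Hg x) (Hh x)).
Qed.

Lemma within_scale (A : set R) (k : R) (f : R -> R) :
  {within A, continuous f} -> {within A, continuous (k \*: f)}.
Proof. move=> H x. exact: (@continuousZr _ _ _ _ k _ (H x)). Qed.

Lemma step_bound (Hs dH : R -> 'M[R]_N) (J a b : R) (psi : 'cV[R]_N) :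
  a < b ->
  (forall i k, {within `[a, b], continuous (fun s => Hs s i k)}) ->
  (forall s, a < s < b -> forall i k, is_derive s 1 (fun t => Hs t i k) (dH s i k)) ->
  (forall s, a < s < b -> opnorm (dH s) <= J) ->
  vnorm psi = 1 ->
  vnorm ((Hs b - Hs a) *m psi) <= J * (b - a).
Proof.
move=> ab Hc Hd HJ hpsi.
set u := (Hs b - Hs a) *m psi.
pose F := \sum_i \sum_k (u i 0 * psi k 0) \*: (fun t => Hs t i k).
have FE t : F t = inner u (Hs t *m psi).
  rewrite /F innerE !fct_sumE; apply: eq_bigr => i _.
  rewrite fct_sumE [(Hs t *m psi) i 0]mxE mulr_sumr; apply: eq_bigr => k _.
  by rewrite /= -[(_ *: _)]/(_ * _) mulrAC -mulrA.
pose dF t := inner u (dH t *m psi).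
have Fd t : t \in `]a, b[%R -> is_derive t 1 F (dF t).
  rewrite in_itv /= => ht.
  have -> : dF t = \sum_i \sum_k (u i 0 * psi k 0) *: dH t i k.
    rewrite /dF innerE; apply: eq_bigr => i _.
    rewrite [(dH t *m psi) i 0]mxE mulr_sumr; apply: eq_bigr => k _.
    by rewrite /= -[(_ *: _)]/(_ * _) mulrAC -mulrA.
  apply: is_derive_sum => i; apply: is_derive_sum => k.
  by apply: is_deriveZ; apply: Hd.
have Fc : {within `[a, b], continuous F}.
  by apply: within_sum => i; apply: within_sum => k; apply: within_scale.
have [c /[dup] hc] := MVT ab Fd Fc.
rewrite in_itv /= => hc' eq.
have Fba : F b - F a = vnorm u ^+ 2.
  by rewrite !FE -innerBr -mulmxBl vnorm2.
have hdF : dF c <= vnorm u * J.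
  rewrite /dF; apply: le_trans (CS _ _) _; apply: ler_wpM2l; first exact: vnorm_ge0.
  apply: le_trans (HJ c hc'); exact: opnorm_ge.
have J0 : 0 <= J by apply: le_trans (HJ c hc'); exact: opnorm_ge0 hpsi.
have ba : 0 < b - a by rewrite subr_gt0.
have u0 := vnorm_ge0 u.
have : vnorm u ^+ 2 <= vnorm u * (J * (b - a)).
  by rewrite -Fba eq mulrA ler_wpM2r // ltW.
move: (vnorm u) u0 => x x0 h.
have Jb : 0 <= J * (b - a) by rewrite mulr_ge0 // ltW.
rewrite leNgt; apply/negP => hlt.
have : x * (J * (b - a)) < x ^+ 2.
  by rewrite expr2 ltr_pM2l // (le_lt_trans Jb hlt).
by rewrite ltNge h.
Qed.
End Op.
From mathcomp Require Import complex.
Section Spec.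
Local Open Scope sesquilinear_scope.
Variable R : realType.
Variable N : nat.
Local Notation C := (R[i]).
Local Notation rc := (real_complex R).

Lemma rc_real (x : R) : rc x \is Num.real.
Proof. by apply/complex_realP; exists x. Qed.

Lemma conj_rc (x : R) : Num.conj (rc x) = rc x.
Proof. exact/conj_Creal/rc_real. Qed.

Lemma Re_add (x y : C) : Re (x + y) = Re x + Re y.
Proof. by case: x; case: y. Qed.
Lemma Im_add (x y : C) : Im (x + y) = Im x + Im y.
Proof. by case: x; case: y. Qed.
Lemma Re_sum (F : 'I_N -> C) : Re (\sum_i F i) = \sum_i Re (F i).
Proof. by elim/big_rec2: _ => // i a b _ <-; rewrite Re_add. Qed.
Lemma Im_sum (F : 'I_N -> C) : Im (\sum_i F i) = \sum_i Im (F i).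
Proof. by elim/big_rec2: _ => // i a b _ <-; rewrite Im_add. Qed.
Lemma Re_rcM (a : R) (z : C) : Re (rc a * z) = a * Re z.
Proof. by case: z => x y /=; rewrite mul0r subr0. Qed.
Lemma Im_rcM (a : R) (z : C) : Im (rc a * z) = a * Im z.
Proof. by case: z => x y /=; rewrite mul0r addr0. Qed.

Lemma Q_cv (v : 'cV[R]_N) : ((map_mx rc v)^t* *m (map_mx rc v)) 0 0 = rc (inner v v).
Proof.
rewrite mxE innerE rmorph_sum; apply: eq_bigr => k _.
by rewrite !mxE conj_rc rmorphM.
Qed.

Lemma Q_sum (x : 'cV[C]_N) : (x^t* *m x) 0 0 = \sum_k `|x k 0| ^+ 2.
Proof. by rewrite mxE; apply: eq_bigr => k _; rewrite !mxE normCKC. Qed.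

Lemma Q_unit (P : 'M[C]_N) (x : 'cV[C]_N) : P \is unitarymx ->
  (P^t* *m x)^t* *m (P^t* *m x) = x^t* *m x.
Proof.
move=> /unitarymxP PP.
rewrite trmx_mul map_mxM trmxCK mulmxA -(mulmxA _ P) PP mulmx1 //.
Qed.


Lemma Re_cvM (A : 'M[R]_N) (z : 'cV[C]_N) :
  map_mx (@Re R) (map_mx rc A *m z) = A *m map_mx (@Re R) z.
Proof.
apply/matrixP => k j; rewrite !mxE Re_sum; apply: eq_bigr => l _.
by rewrite !mxE Re_rcM.
Qed.

Lemma Im_cvM (A : 'M[R]_N) (z : 'cV[C]_N) :
  map_mx (@Im R) (map_mx rc A *m z) = A *m map_mx (@Im R) z.
Proof.
apply/matrixP => k j; rewrite !mxE Im_sum; apply: eq_bigr => l _.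
by rewrite !mxE Im_rcM.
Qed.

Lemma key (A : 'M[R]_N) (phi : 'cV[R]_N) (g : R) :
  A^T = A ->
  (forall v : 'cV[R]_N, A *m v = 0 -> exists c : R, v = c *: phi) ->
  (forall l, eigenvalue A l -> l != 0 -> g ^+ 2 <= l ^+ 2) ->
  forall w : 'cV[R]_N, inner phi w = 0 ->
  g ^+ 2 * inner w w <= inner (A *m w) (A *m w).
Proof.
move=> Asym Aker Aeig w wphi.
set Ac := map_mx rc A.
have AcT : Ac^T = Ac by rewrite /Ac map_trmx Asym.
have Acs : Ac^t* = Ac.
  by apply/matrixP => i j; rewrite AcT !mxE conj_rc.
have Anormal : Ac \is normalmx by apply/normalmxP; rewrite Acs.
set P := spectralmx Ac; set d := spectral_diag Ac.
have Pu : P \is unitarymx := spectral_unitarymx Ac.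
have AcE : Ac = P^t* *m diag_mx d *m P.
  by rewrite -invmx_unitary //; exact/orthomx_spectralP.
have PP : P *m P^t* = 1%:M by apply/unitarymxP.
have PP' : P^t* *m P = 1%:M.
  by rewrite -invmx_unitary // mulVmx // unitarymx_unit.
have dreal : d \is a mxOver Num.real.
  apply: hermitian_spectral_diag_real; apply: realsym_hermsym.
    by apply/is_hermitianmxP; rewrite expr0 scale1r map_mx_id // AcT.
  by apply/mxOverP => i j; rewrite mxE rc_real.
set wc := map_mx rc w. set y := P *m wc.
have Awc : Ac *m wc = P^t* *m (diag_mx d *m y) by rewrite AcE !mulmxA.
have wcE : wc = P^t* *m y by rewrite /y mulmxA PP' mul1mx.
have LHS : rc (inner (A *m w) (A *m w)) = \sum_i `|d 0 i * y i 0| ^+ 2.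
  rewrite -Q_cv map_mxM -/Ac -/wc Awc Q_unit // Q_sum; apply: eq_bigr => i _.
  by rewrite mul_diag_mx mxE.
have RHS : rc (inner w w) = \sum_i `|y i 0| ^+ 2.
  by rewrite -Q_cv -/wc wcE Q_unit // Q_sum.
rewrite -lecR rmorphM /= LHS RHS mulr_sumr; apply: ler_sum => i _.
rewrite normrM exprMn.
set p := row i P.
have pAc : p *m Ac = d 0 i *: p.
  have : P *m Ac = diag_mx d *m P by rewrite AcE !mulmxA PP mul1mx.
  move/(congr1 (row i)); rewrite row_mul => ->.
  by apply/rowP => j; rewrite mul_diag_mx !mxE.
have pn0 : p != 0.
  apply/eqP => p0; have : row i (P *m P^t*) = row i 1%:M by rewrite PP.
  rewrite row_mul -/p p0 mul0mx => /rowP /(_ i); rewrite !mxE eqxx /=.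
  by move/eqP; rewrite eq_sym oner_eq0.
have [d0|dn0] := eqVneq (d 0 i) 0.
  suff -> : y i 0 = 0 by rewrite normr0 expr0n /= !mulr0.
  have pA0 : p *m Ac = 0 by rewrite pAc d0 scale0r.
  set z := p^T.
  have Az : Ac *m z = 0 by rewrite /z -[Ac in Ac *m _]AcT -trmx_mul pA0 trmx0.
  have [a ha] : exists a, map_mx (@Re R) z = a *: phi.
    apply: Aker; rewrite -Re_cvM -/Ac Az; apply/matrixP => k j; rewrite !mxE //.
  have [b hb] : exists b, map_mx (@Im R) z = b *: phi.
    apply: Aker; rewrite -Im_cvM -/Ac Az; apply/matrixP => k j; rewrite !mxE //.
  have rcM (x x' : R) : rc (x * x') = rc x * rc x' := rmorphM _ x x'.
  have zE l : P i l = (rc a + 'i%C * rc b) * rc (phi l 0).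
    have -> : P i l = z l 0 by rewrite /z /p !mxE.
    rewrite [z l 0]complexE.
    have -> : Re (z l 0) = a * phi l 0.
      by have := congr1 (fun M : 'cV[R]_N => M l 0) ha; rewrite !mxE.
    have -> : Im (z l 0) = b * phi l 0.
      by have := congr1 (fun M : 'cV[R]_N => M l 0) hb; rewrite !mxE.
    rewrite !rcM; ring.
  rewrite /y mxE (eq_bigr (fun l => (rc a + 'i%C * rc b) * rc (phi l 0 * w l 0))).
    by rewrite -mulr_sumr -rmorph_sum -innerE wphi rmorph0 mulr0.
  by move=> l _; rewrite zE mxE rcM mulrA.
have [l dl] : exists l, d 0 i = rc l by apply/complex_realP/mxOverP.
have eAc : eigenvalue Ac (rc l) by apply/eigenvalueP; exists p => //; rewrite -dl.
have eA : eigenvalue A l.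
  by move: eAc; rewrite !eigenvalue_root_char /Ac -map_char_poly fmorph_root.
have ln0 : l != 0 by move: dn0; rewrite dl; apply: contra => /eqP ->; rewrite rmorph0.
have := Aeig l eA ln0; rewrite -lecR => hl.
rewrite ler_wpM2r ?exprn_ge0 ?normr_ge0 //.
apply: le_trans hl _.
rewrite real_normK ?dl ?rc_real // rmorphXn /=.
exact: lexx.
Qed.

End Spec.
Section Gap.
Variable R : realType.
Variable N : nat.

Lemma psd_sum M (Hs : 'I_M -> 'M[R]_N) : (forall a, psd (Hs a)) -> psd (\sum_a Hs a).
Proof.
move=> H; split.
  apply/matrixP => i j; rewrite !mxE !summxE; apply: eq_bigr => a _.
  by case: (H a) => /matrixP /(_ i j); rewrite mxE.
move=> v; rewrite /qform mulmx_sumr mulmx_suml summxE.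
by apply: sumr_ge0 => a _; case: (H a) => _; apply.
Qed.

Lemma eig_ge0 (A : 'M[R]_N) l : psd A -> eigenvalue A l -> 0 <= l.
Proof.
move=> [_ pA] /eigenvalueP [v vA vn0].
have := pA v^T; rewrite /qform trmxK vA -scalemxAl mxE.
have : 0 < inner v^T v^T.
  rewrite lt_neqAle inner_ge0 andbT eq_sym; apply/eqP => h.
  by move/eqP: vn0; apply; rewrite -[v]trmxK (inner0_eq0 h) trmx0.
rewrite /inner trmxK => h0 h1.
by rewrite -(pmulr_lge0 _ h0).
Qed.

Lemma gap_lemma (A : 'M[R]_N) (phi : 'cV[R]_N) d :
  psd A -> phi != 0 -> A *m phi = 0 ->
  (forall v : 'cV[R]_N, A *m v = 0 -> exists c : R, v = c *: phi) ->
  is_spectral_gap A d ->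
  0 < d /\ (forall l, eigenvalue A l -> l != 0 -> d <= l).
Proof.
move=> Apsd phin0 Aphi Aker [l0 [l1 [[el0 minl0] sec ->]]].
have Asym : A^T = A by case: Apsd.
have e0 : eigenvalue A 0.
  apply/eigenvalueP; exists phi^T.
    by rewrite -{1}Asym -trmx_mul Aphi trmx0 scale0r.
  by apply: contra phin0 => /eqP h; rewrite -[phi]trmxK h trmx0.
have l00 : l0 = 0.
  by apply/le_anti; rewrite minl0 // (eig_ge0 Apsd el0).
subst l0; move: sec; rewrite /is_second_eig.
case: ifP => [hr _|_ [el1 l1p l1min]].
  exfalso; move: hr; apply/negP; rewrite -ltnNge ltnS.
  have : (eigenspace A 0 <= phi^T)%MS.
    apply/row_subP => r.
    have /eigenspaceP := row_sub r (eigenspace A 0).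
    rewrite scale0r => h.
    have : A *m (row r (eigenspace A 0))^T = 0.
      by rewrite -{1}Asym -trmx_mul h trmx0.
    move=> /Aker [c hc]; rewrite -[row r _]trmxK hc.
    rewrite (_ : (c *: phi)^T = c *: phi^T); last by apply/matrixP => x y; rewrite !mxE.
    exact: scalemx_sub.
  by move/mxrankS => h; apply: leq_trans h (rank_leq_row _).
rewrite subr0; split => // l el ln0; apply: l1min => //.
by rewrite lt_neqAle eq_sym ln0 (eig_ge0 Apsd el).
Qed.
End Gap.

Lemma foo (R : realType) (k T : nat) : (0:R) < T%:R -> (k <= T)%N -> k%:R / T%:R <= 1 :> R.
Proof.
move=> sT hk.
by rewrite ler_pdivrMr // mul1r ler_nat.
Qed.
Unset Implicit Arguments.
Theorem lemma5p1 (R : realType) (n M T : nat)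
  (H : 'I_M -> R -> 'M[R]_(2 ^ n)) (J Delta : R)
  (psi : nat -> 'cV[R]_(2 ^ n)) :
  (forall s : R, 0 <= s <= 1 -> forall a, stoquastic (H a s)) ->
  (forall s : R, 0 <= s <= 1 -> frustration_free (fun a => H a s)) ->
  (forall i k, cont_on_01 (fun s : R => Htot H s i k)) ->
  (forall s : R, 0 < s < 1 -> forall i k,
      derivable (fun t => Htot H t i k) s 1) ->
  (forall s : R, 0 < s < 1 -> opnorm (dHtot H s) <= J) ->
  (0 < T)%N ->
  (forall j, (j <= T)%N ->
     [/\ nonneg_state (psi j),
         Htot H (j%:R / T%:R) *m psi j = 0 &
         forall v : 'cV[R]_(2 ^ n), Htot H (j%:R / T%:R) *m v = 0 ->
           exists c : R, v = c *: psi j]) ->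
  (exists gap : nat -> R,
     [/\ forall j, (j <= T)%N -> is_spectral_gap (Htot H (j%:R / T%:R)) (gap j),
         forall j, (j <= T)%N -> Delta <= gap j &
         exists2 j, (j <= T)%N & Delta = gap j]) ->
  forall j, (j < T)%N ->
    1 - J ^+ 2 / (T%:R ^+ 2 * Delta ^+ 2) <= inner (psi j.+1) (psi j).
Proof.
move=> Hstoq Hff Hcont Hder HJ T0 Hpsi [gap [Hgap Hle [j0 hj0 HD]]] j hj.
have sT : (0 : R) < T%:R by rewrite ltr0n.
have s01 k : (k <= T)%N -> (0 : R) <= (k%:R / T%:R : R) <= 1.
  move=> hk; apply/andP; split; last exact: foo sT hk.
  by apply: divr_ge0; rewrite ler0n.
have Hpsd s : 0 <= s <= 1 -> psd (Htot H s).
  by move=> hs; apply: psd_sum; case: (Hff s hs).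
have Gap k : (k <= T)%N -> 0 < gap k /\
    (forall l, eigenvalue (Htot H (k%:R / T%:R)) l -> l != 0 -> gap k <= l).
  move=> hk; have [[_ hn] Hz Huniq] := Hpsi k hk.
  apply: (gap_lemma (Hpsd _ (s01 k hk)) _ Hz Huniq (Hgap k hk)).
  apply/eqP => h; move: hn; rewrite h /vnorm big1 ?sqrtr0 => [h01|i _].
    by move/eqP: h01; rewrite eq_sym oner_eq0.
  by rewrite mxE expr0n.
have Dpos : 0 < Delta by rewrite HD; case: (Gap j0 hj0).
have hjT : (j <= T)%N := ltnW hj.
have [[psin psinorm] Hz0 _] := Hpsi j hjT.
have [[phin phinorm] Hz1 Huniq1] := Hpsi j.+1 hj.
set a := (j%:R / T%:R : R); set b := (j.+1%:R / T%:R : R).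
have ab : a < b by rewrite /a /b ltr_pM2r ?invr_gt0 // ltr_nat.
have /andP[a0 _] := s01 j hjT.
have /andP[_ b1] := s01 j.+1 hj.
have step := step_bound (Hs := Htot H) (dH := dHtot H) (J := J) ab _ _ _ psinorm.
have {step} step : vnorm ((Htot H b - Htot H a) *m psi j) <= J * (b - a).
  apply: step.
  - move=> i k; apply: continuous_subspaceW (Hcont i k).
    move=> x /=; rewrite !in_itv /= => /andP[h1 h2].
    by rewrite (le_trans a0 h1) (le_trans h2 b1).
  - move=> s /andP[h1 h2] i k.
    have hs : 0 < s < 1 by rewrite (le_lt_trans a0 h1) (lt_le_trans h2 b1).
    rewrite /dHtot mxE derive1E; exact: derivableP (Hder s hs i k).
  - move=> s /andP[h1 h2]; apply: HJ.
    by rewrite (le_lt_trans a0 h1) (lt_le_trans h2 b1).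
have Aps : Htot H b *m psi j = (Htot H b - Htot H a) *m psi j.
  by rewrite mulmxBl Hz0 subr0.
have ba : b - a = T%:R^-1.
  by rewrite /a /b -mulrBl -natrB // subSnn mul1r.
set c := inner (psi j.+1) (psi j).
have c0 : 0 <= c by rewrite /c innerE; apply: sumr_ge0 => i _; rewrite mulr_ge0.
have phiphi : inner (psi j.+1) (psi j.+1) = 1 by rewrite -vnorm2 phinorm expr1n.
have psipsi : inner (psi j) (psi j) = 1 by rewrite -vnorm2 psinorm expr1n.
set w := psi j - c *: psi j.+1.
have wphi : inner (psi j.+1) w = 0 by rewrite innerBr innerZr phiphi mulr1 subrr.
have Aw : Htot H b *m w = Htot H b *m psi j.
  by rewrite mulmxBr -scalemxAr Hz1 scaler0 subr0.
have ww : inner w w = 1 - c ^+ 2.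
  rewrite /w innerBl !innerBr !innerZl !innerZr psipsi phiphi (innerC (psi j)) -/c.
  by rewrite expr2 mulr1 subrr subr0.
have Asym : (Htot H b)^T = Htot H b by case: (Hpsd b (s01 j.+1 hj)).
have Heig : forall l, eigenvalue (Htot H b) l -> l != 0 -> Delta ^+ 2 <= l ^+ 2.
  move=> l el ln0; have [_ Hl] := Gap j.+1 hj.
  have h1 := Hl l el ln0; have h2 := Hle j.+1 hj.
  have h3 : Delta <= l by apply: le_trans h2 h1.
  nra.
have K := key Asym Huniq1 Heig wphi.
rewrite ww Aw Aps -vnorm2 in K.
move: K step; rewrite ba.
set x := vnorm _.
have x0 : 0 <= x by apply: vnorm_ge0.
move=> K step.
set E := J ^+ 2 / (T%:R ^+ 2 * Delta ^+ 2).
have EE : Delta ^+ 2 * E = (J * T%:R^-1) ^+ 2.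
  by rewrite /E; field; rewrite !lt0r_neq0.
have x2 : x ^+ 2 <= (J * T%:R^-1) ^+ 2 by nra.
have D2 : 0 < Delta ^+ 2 by rewrite exprn_gt0.
have hE : 1 - c ^+ 2 <= E.
  by rewrite -(ler_pM2l D2) EE (le_trans K x2).
have c1 : c <= 1.
  have : 0 <= inner w w := inner_ge0 w.
  rewrite ww => h; nra.
nra.
Qed.
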